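(* Let $\lambda\in\mathbb N$ and let $X$ be a random variable over $\{0,1\}^\lambda$ with min-entropy $\mathbf H_{\min}(X)\ge h$. For any finite-dimensional Hilbert spaces $\mathcal H_B,\mathcal H_C$, any families of POVMs $\{\{B_\theta^x\}_{x\in\{0,1\}^\lambda}\}_{\theta\in\{0,1\}^\lambda}$ on $\mathcal H_B$ and $\{\{C_\theta^x\}_{x\in\{0,1\}^\lambda}\}_{\theta\in\{0,1\}^\lambda}$ on $\mathcal H_C$, and any CPTP map $\Phi:\mathcal D((\mathbb C^2)^{\otimes\lambda})\to\mathcal D(\mathcal H_B\otimes\mathcal H_C)$, $$\sum_{x\in\{0,1\}^\lambda}\Pr[X=x]\;\mathbb E_{\theta\leftarrow\{0,1\}^\lambda}\,\mathrm{Tr}\!\left[(B_\theta^x\otimes C_\theta^x)\,\Phi\big(|x^\theta\rangle\langle x^\theta|\big)\right]\;\le\;2^{-h}\left(1+\tfrac{1}{\sqrt2}\right)^{\lambda}.$$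
   Context: For $x,\theta\in\{0,1\}^\lambda$, $|x^\theta\rangle=H^{\theta}|x\rangle$ where $H^\theta=H^{\theta_1}\otimes\cdots\otimes H^{\theta_\lambda}$ and $H$ is the single-qubit Hadamard gate ($H^0=\mathds 1$). $\mathbb E_\theta$ denotes the expectation over uniform $\theta$. $\mathbf H_{\min}(X)=-\log_2\max_x\Pr[X=x]$. *)

(* Defs.v *)
From HB Require Import structures.
From mathcomp Require Import all_boot all_algebra.
From mathcomp Require Import reals exp.
From mathcomp Require Import complex mxtens.
Set Implicit Arguments.
Unset Strict Implicit.
Unset Printing Implicit Defensive.
Import GRing.Theory Num.Theory.
Local Open Scope ring_scope.

Definition bits (lam : nat) := {ffun 'I_lam -> bool}.

(* dimension of (C^2)^{⊗lam}; computational basis indexed by bit strings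
   via enum_val / enum_rank (this number equals 2^lam). *)
Definition qdim (lam : nat) : nat := #|{: bits lam}|.

Section Quantum.
Variable R : realType.
Local Notation C := R[i].

Definition adjmx m n (A : 'M[C]_(m, n)) : 'M[C]_(n, m) :=
  \matrix_(i, j) (A j i)^*.

Definition psdmx n (A : 'M[C]_n) : Prop :=
  forall v : 'cV[C]_n, 0 <= (adjmx v *m A *m v) 0 0.

Definition povm n (T : finType) (E : T -> 'M[C]_n) : Prop :=
  (forall t, psdmx (E t)) /\ \sum_(t : T) E t = 1%:M.

Definition linear_map n m (Phi : 'M[C]_n -> 'M[C]_m) : Prop :=
  forall (a : C) (A B : 'M[C]_n), Phi (a *: A + B) = a *: Phi A + Phi B.

(* (id_k ⊗ Phi) acting on operators on C^k ⊗ C^n (index convention of tensmx) *)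
Definition ampl k n m (Phi : 'M[C]_n -> 'M[C]_m) (M : 'M[C]_(k * n)) : 'M[C]_(k * m) :=
  \sum_(i < k) \sum_(j < k)
    (delta_mx i j *t Phi (\matrix_(a, b) M (mxtens_index (i, a)) (mxtens_index (j, b)))).

Definition completely_positive n m (Phi : 'M[C]_n -> 'M[C]_m) : Prop :=
  forall (k : nat) (M : 'M[C]_(k * n)), psdmx M -> psdmx (ampl Phi M).

Definition trace_preserving n m (Phi : 'M[C]_n -> 'M[C]_m) : Prop :=
  forall M : 'M[C]_n, \tr (Phi M) = \tr M.

Definition cptp n m (Phi : 'M[C]_n -> 'M[C]_m) : Prop :=
  [/\ linear_map Phi, completely_positive Phi & trace_preserving Phi].

(* single-qubit amplitude <b| H^t |a> *)
Definition had_amp (t a b : bool) : C :=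
  if t then ((Num.sqrt (2 : R))^-1)%:C%C * (-1) ^+ (a && b)
  else (a == b)%:R.

(* |x^theta> = H^theta |x>, as a column vector in (C^2)^{⊗lam} *)
Definition bb84_ket (lam : nat) (x theta : bits lam) : 'cV[C]_(qdim lam) :=
  \col_k \prod_(i < lam) had_amp (theta i) (x i) ((enum_val k : bits lam) i).

Definition bb84_proj (lam : nat) (x theta : bits lam) : 'M[C]_(qdim lam) :=
  bb84_ket x theta *m adjmx (bb84_ket x theta).

Definition is_distr (T : finType) (p : T -> R) : Prop :=
  (forall t, 0 <= p t) /\ \sum_(t : T) p t = 1.

Definition log2 (x : R) : R := ln x / ln 2.

Definition Hmin (T : finType) (p : T -> R) : R :=
  - log2 (\big[Num.max/0]_(t : T) p t).

End Quantum.

Arguments bb84_ket {R lam}.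
Arguments bb84_proj {R lam}.

(* Main.v *)
Require Import Defs.
From HB Require Import structures.
From mathcomp Require Import all_boot all_algebra.
From mathcomp Require Import reals exp.
From mathcomp Require Import complex mxtens.
From mathcomp Require Import ring order sequences.
Set Implicit Arguments.
Unset Strict Implicit.
Unset Printing Implicit Defensive.
Import Order.TTheory GRing.Theory Num.Theory.
Local Open Scope ring_scope.

Section Basics.
Variable R : realType.
Local Notation C := R[i].

Lemma adjmxE m n (A : 'M[C]_(m, n)) i j : adjmx A i j = (A j i)^*.
Proof. by rewrite mxE. Qed.

Lemma adjmxK m n (A : 'M[C]_(m, n)) : adjmx (adjmx A) = A.
Proof. by apply/matrixP=> i j; rewrite !mxE conjCK. Qed.

Lemma adjmx_mul m n p (A : 'M[C]_(m, n)) (B : 'M[C]_(n, p)) :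
  adjmx (A *m B) = adjmx B *m adjmx A.
Proof.
apply/matrixP=> i j; rewrite !mxE rmorph_sum; apply: eq_bigr => k _.
by rewrite !mxE rmorphM mulrC.
Qed.

Lemma adjmxD m n (A B : 'M[C]_(m, n)) : adjmx (A + B) = adjmx A + adjmx B.
Proof. by apply/matrixP=> i j; rewrite !mxE rmorphD. Qed.

Lemma adjmx_sum m n (I : finType) (F : I -> 'M[C]_(m, n)) :
  adjmx (\sum_i F i) = \sum_i adjmx (F i).
Proof.
apply/matrixP=> i j; rewrite !mxE summxE rmorph_sum summxE.
by apply: eq_bigr => k _; rewrite !mxE.
Qed.

Lemma adjmxZ m n (a : C) (A : 'M[C]_(m, n)) : adjmx (a *: A) = a^* *: adjmx A.
Proof. by apply/matrixP=> i j; rewrite !mxE rmorphM. Qed.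

Lemma adjmx1 n : adjmx (1%:M : 'M[C]_n) = 1%:M.
Proof.
by apply/matrixP=> i j; rewrite !mxE conjC_nat eq_sym.
Qed.

Lemma adjmx_tens m n p q (A : 'M[C]_(m, n)) (B : 'M[C]_(p, q)) :
  adjmx (A *t B) = adjmx A *t adjmx B.
Proof. by apply/matrixP=> i j; rewrite !mxE rmorphM. Qed.

Lemma tensmx11 m n : (1%:M : 'M[C]_m) *t (1%:M : 'M[C]_n) = 1%:M.
Proof.
apply/matrixP=> i j.
case: (mxtens_indexP i) => i1 i2; case: (mxtens_indexP j) => j1 j2.
rewrite tensmxE !mxE.
have -> : (mxtens_index (i1, i2) == mxtens_index (j1, j2)) = ((i1, i2) == (j1, j2)).
  by apply/eqP/eqP => [/(can_inj (@mxtens_indexK m n))|->].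
rewrite xpair_eqE.
by case: (i1 == j1); case: (i2 == j2); rewrite /= ?mulr1 ?mulr0 ?mul0r.
Qed.

Lemma tensmxDl m n p q (A B : 'M[C]_(m, n)) (D : 'M[C]_(p, q)) :
  (A + B) *t D = A *t D + B *t D.
Proof. by apply/matrixP=> i j; rewrite !mxE mulrDl. Qed.

Lemma tensmxDr m n p q (A : 'M[C]_(m, n)) (B D : 'M[C]_(p, q)) :
  A *t (B + D) = A *t B + A *t D.
Proof. by apply/matrixP=> i j; rewrite !mxE mulrDr. Qed.

Lemma tensmx_suml m n p q (I : finType) (F : I -> 'M[C]_(m, n)) (D : 'M[C]_(p, q)) :
  (\sum_i F i) *t D = \sum_i (F i *t D).
Proof.
apply/matrixP=> i j; rewrite !mxE !summxE mulr_suml.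
by apply: eq_bigr => k _; rewrite !mxE.
Qed.

Lemma tensmx_sumr m n p q (I : finType) (A : 'M[C]_(m, n)) (F : I -> 'M[C]_(p, q)) :
  A *t (\sum_i F i) = \sum_i (A *t F i).
Proof.
apply/matrixP=> i j; rewrite !mxE !summxE mulr_sumr.
by apply: eq_bigr => k _; rewrite !mxE.
Qed.

Lemma tensmxZl m n p q (a : C) (A : 'M[C]_(m, n)) (D : 'M[C]_(p, q)) :
  (a *: A) *t D = a *: (A *t D).
Proof. by apply/matrixP=> i j; rewrite !mxE mulrA. Qed.

Lemma tensmxZr m n p q (a : C) (A : 'M[C]_(m, n)) (D : 'M[C]_(p, q)) :
  A *t (a *: D) = a *: (A *t D).
Proof. by apply/matrixP=> i j; rewrite !mxE mulrCA. Qed.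

Lemma mxtrace_tens m n (A : 'M[C]_m) (B : 'M[C]_n) :
  \tr (A *t B) = \tr A * \tr B.
Proof.
rewrite /mxtrace mulr_sum; apply: eq_bigr => k _.
by rewrite !mxE.
Qed.

Definition dot n (u v : 'cV[C]_n) : C := (adjmx u *m v) 0 0.
Definition n2 n (u : 'cV[C]_n) : C := dot u u.

Lemma dotE n (u v : 'cV[C]_n) : dot u v = \sum_i (u i 0)^* * v i 0.
Proof. by rewrite /dot mxE; apply: eq_bigr => i _; rewrite mxE. Qed.

Lemma dotC n (u v : 'cV[C]_n) : dot v u = (dot u v)^*.
Proof.
rewrite !dotE rmorph_sum; apply: eq_bigr => i _.
by rewrite rmorphM /= conjCK mulrC.
Qed.

Lemma n2_ge0 n (u : 'cV[C]_n) : 0 <= n2 u.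
Proof.
rewrite /n2 dotE; apply: sumr_ge0 => i _.
by rewrite -normCKC exprn_ge0.
Qed.

Lemma n2_real n (u : 'cV[C]_n) : n2 u \is Num.real.
Proof. exact: ger0_real (n2_ge0 u). Qed.

Lemma dot_mull n m (A : 'M[C]_(m, n)) (u : 'cV[C]_m) (v : 'cV[C]_n) :
  dot u (A *m v) = dot (adjmx A *m u) v.
Proof. by rewrite /dot adjmx_mul adjmxK mulmxA. Qed.

Lemma dotDr n (u v w : 'cV[C]_n) : dot u (v + w) = dot u v + dot u w.
Proof. by rewrite /dot mulmxDr mxE. Qed.

Lemma dotDl n (u v w : 'cV[C]_n) : dot (v + w) u = dot v u + dot w u.
Proof. by rewrite /dot adjmxD mulmxDl mxE. Qed.

Lemma dot_sumr n (I : finType) (u : 'cV[C]_n) (F : I -> 'cV[C]_n) :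
  dot u (\sum_i F i) = \sum_i dot u (F i).
Proof. by rewrite /dot mulmx_sumr summxE. Qed.

Lemma dot_suml n (I : finType) (u : 'cV[C]_n) (F : I -> 'cV[C]_n) :
  dot (\sum_i F i) u = \sum_i dot (F i) u.
Proof. by rewrite /dot adjmx_sum mulmx_suml summxE. Qed.

Lemma dotZr n (a : C) (u v : 'cV[C]_n) : dot u (a *: v) = a * dot u v.
Proof. by rewrite /dot -scalemxAr mxE. Qed.

Lemma dotZl n (a : C) (u v : 'cV[C]_n) : dot (a *: u) v = a^* * dot u v.
Proof. by rewrite /dot adjmxZ -scalemxAl mxE. Qed.

Lemma dotNr n (u v : 'cV[C]_n) : dot u (- v) = - dot u v.
Proof. by rewrite -scaleN1r dotZr mulN1r. Qed.

Lemma dotNl n (u v : 'cV[C]_n) : dot (- u) v = - dot u v.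
Proof. by rewrite -scaleN1r dotZl rmorphN1 mulN1r. Qed.

Definition rd n (u v : 'cV[C]_n) : C := dot u v + (dot u v)^*.

Lemma rd_real n (u v : 'cV[C]_n) : rd u v \is Num.real.
Proof. by apply/CrealP; rewrite /rd rmorphD /= conjCK addrC. Qed.

Lemma n2D n (u v : 'cV[C]_n) : n2 (u + v) = n2 u + n2 v + rd u v.
Proof.
rewrite /n2 /rd dotDl !dotDr (dotC u v); ring.
Qed.

Lemma n2B n (u v : 'cV[C]_n) : n2 (u - v) = n2 u + n2 v - rd u v.
Proof.
rewrite n2D /n2 dotNl dotNr opprK /rd dotNr rmorphN /=; ring.
Qed.

Lemma rd_le n (u v : 'cV[C]_n) : rd u v <= n2 u + n2 v.
Proof. by rewrite -subr_ge0 -n2B n2_ge0. Qed.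

Lemma rd_ge n (u v : 'cV[C]_n) : - (n2 u + n2 v) <= rd u v.
Proof. by rewrite -subr_ge0 opprK addrC -n2D n2_ge0. Qed.

Lemma norm_rd_le n (u v : 'cV[C]_n) : `|rd u v| <= n2 u + n2 v.
Proof.
by rewrite real_ler_norml ?rd_real // rd_le rd_ge.
Qed.

Lemma rdZ n (s : C) (u v : 'cV[C]_n) : s \is Num.real -> rd (s *: u) v = s * rd u v.
Proof.
move=> /CrealP sr; rewrite /rd dotZl sr rmorphM /= sr mulrDr.
done.
Qed.

Lemma n2Z n (s : C) (u : 'cV[C]_n) : s \is Num.real -> n2 (s *: u) = s ^+ 2 * n2 u.
Proof.
move=> /CrealP sr; rewrite /n2 dotZl dotZr sr mulrA expr2 //.
Qed.

Lemma rd_scaled n (s : C) (u v : 'cV[C]_n) : s \is Num.real ->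
  s * rd u v <= s ^+ 2 * n2 u + n2 v.
Proof.
move=> sr; have := rd_le (s *: u) v.
by rewrite rdZ // n2Z.
Qed.

End Basics.

Section Sqrt.
Variable R : realType.
Local Notation C := R[i].

Lemma adjmx_tc m n (M : 'M[C]_(m, n)) : adjmx M = map_mx Num.conj M^T.
Proof. by apply/matrixP=> i j; rewrite !mxE. Qed.

Lemma dot_delta n (i : 'I_n) (w : 'cV[C]_n) : dot (delta_mx i 0) w = w i 0.
Proof.
rewrite /dot.
have -> : adjmx (delta_mx i 0 : 'cV[C]_n) = delta_mx 0 i.
  apply/matrixP=> a b; rewrite !mxE conjC_nat.
  by rewrite [a]ord1 !eqxx /= andbT eq_sym.
by rewrite -rowE mxE.
Qed.

Lemma psd_quad n (A : 'M[C]_n) (v : 'cV[C]_n) :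
  (adjmx v *m A *m v) 0 0 = dot v (A *m v).
Proof. by rewrite /dot mulmxA. Qed.

Lemma psd_real n (A : 'M[C]_n) v : psdmx A -> dot v (A *m v) \is Num.real.
Proof. by move=> /(_ v); rewrite psd_quad => /ger0_real. Qed.

Lemma psd_herm n (A : 'M[C]_n) : psdmx A -> adjmx A = A.
Proof.
move=> psdA.
have key : forall u v : 'cV[C]_n, (dot v (A *m u))^* = dot u (A *m v).
  move=> u v.
  have r1 := psd_real (u + v) psdA.
  have r2 := psd_real ('i *: u + v) psdA.
  have ru := psd_real u psdA; have rv := psd_real v psdA.
  move: r1 r2; rewrite !mulmxDr !dotDl !dotDr -!scalemxAr !dotZl !dotZr.
  move: ru rv => /CrealP ru /CrealP rv /CrealP r1 /CrealP r2.
  move: r1 r2; rewrite !rmorphD !rmorphM /= ?rmorphN /= ?conjCi ?conjCK ?rmorphN /= ?conjCi ?opprK ru rv.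
  set z := dot u (A *m v); set w := dot v (A *m u).
  set fu := dot u (A *m u); set fv := dot v (A *m v).
  move=> /eqP; rewrite -subr_eq0 => /eqP e1.
  move=> /eqP; rewrite -subr_eq0 => /eqP e2.
  have ii : 'i * 'i = -1 :> C by rewrite -expr2 sqrCi.
  have E1 : z^* + w^* - (z + w) = 0 by rewrite -[RHS]e1; ring.
  have E2 : 'i * (z^* - w^* - (w - z)) = 0.
    by rewrite -[RHS]e2; ring.
  move/eqP: E2; rewrite mulf_eq0 (negPf (neq0Ci _)) /= => /eqP E2.
  have : 2 * (w^* - z) = 0 by rewrite -[RHS](subr0 0) -[X in _ = X - _]E1 -[X in _ = _ - X]E2; ring.
  by move/eqP; rewrite mulf_eq0 pnatr_eq0 /= subr_eq0 => /eqP.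
apply/matrixP=> i j; rewrite !mxE.
have := key (delta_mx i 0) (delta_mx j 0).
by rewrite !dot_delta -!colE !mxE => ->.
Qed.

Lemma adjmx_diag n (s : 'rV[C]_n) : (forall i, s 0 i \is Num.real) ->
  adjmx (diag_mx s) = diag_mx s.
Proof.
move=> sr; apply/matrixP=> i j; rewrite !mxE eq_sym.
case: eqP => [->|_]; rewrite ?mulr1n ?mulr0n ?conjC0 //.
exact: conj_Creal.
Qed.

Lemma sqrt_gen n (A U : 'M[C]_n) (d : 'rV[C]_n) :
  U *m adjmx U = 1%:M -> adjmx U *m U = 1%:M ->
  A = adjmx U *m diag_mx d *m U -> psdmx A ->
  adjmx (adjmx U *m diag_mx (\row_i sqrtC (d 0 i)) *m U) =
    adjmx U *m diag_mx (\row_i sqrtC (d 0 i)) *m U /\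
  (adjmx U *m diag_mx (\row_i sqrtC (d 0 i)) *m U) *m
    (adjmx U *m diag_mx (\row_i sqrtC (d 0 i)) *m U) = A.
Proof.
move=> Uu Uu' eA psdA.
have d_ge0 : forall i, 0 <= d 0 i.
  move=> i; have := psdA (adjmx U *m delta_mx i 0).
  rewrite psd_quad eA -!mulmxA dot_mull adjmxK.
  rewrite [U *m (adjmx U *m _)]mulmxA Uu mul1mx dot_delta -colE !mxE eqxx.
  by rewrite mulr1n.
set s := \row_i sqrtC (d 0 i).
have sr : forall i, s 0 i \is Num.real.
  by move=> i; rewrite mxE; apply: sqrtC_real.
split.
  by rewrite !adjmx_mul adjmxK adjmx_diag // mulmxA.
rewrite eA -!mulmxA; congr (_ *m _).
rewrite [U *m (adjmx U *m _)]mulmxA Uu mul1mx !mulmxA mulmx_diag.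
congr (diag_mx _ *m _); apply/rowP=> i; rewrite !mxE -expr2 sqrtCK //.
Qed.

Definition sqrtmx n (A : 'M[C]_n) : 'M[C]_n :=
  adjmx (spectralmx A) *m diag_mx (\row_i sqrtC (spectral_diag A 0 i)) *m spectralmx A.

Lemma psd_sqrt n (A : 'M[C]_n) : psdmx A ->
  adjmx (sqrtmx A) = sqrtmx A /\ sqrtmx A *m sqrtmx A = A.
Proof.
move=> psdA; have hA := psd_herm psdA.
have herm : A \is hermsymmx.
  by apply/is_hermitianmxP; rewrite expr0 scale1r -adjmx_tc hA.
have /orthomx_spectralP eA := hermitian_normalmx herm.
have Uun := spectral_unitarymx A.
have Uu : spectralmx A *m adjmx (spectralmx A) = 1%:M.
  by rewrite adjmx_tc; apply/unitarymxP.
have iU : invmx (spectralmx A) = adjmx (spectralmx A).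
  by rewrite adjmx_tc; apply: invmx_unitary.
have Uu' : adjmx (spectralmx A) *m spectralmx A = 1%:M.
  by rewrite -iU mulVmx // unitarymx_unit.
rewrite iU in eA.
exact: (sqrt_gen Uu Uu' eA psdA).
Qed.

End Sqrt.

Section Kets.
Variable R : realType.
Local Notation C := R[i].
Local Notation s2 := ((Num.sqrt (2 : R))^-1).

Definition hadR (t a b : bool) : R :=
  if t then s2 * (-1) ^+ (a && b) else (a == b)%:R.

Lemma had_ampE t a b : had_amp R t a b = (hadR t a b)%:C%C.
Proof.
rewrite /had_amp /hadR; case: t.
  by rewrite rmorphM rmorphXn rmorphN1.
by rewrite rmorph_nat.
Qed.

Lemma conjC_realC (x : R) : (x%:C%C : C)^* = x%:C%C.
Proof.
apply: conj_Creal.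
case: (lerP 0 x) => hx.
  by apply: ger0_real; rewrite lecR.
by apply: ler0_real; rewrite lecR ltW.
Qed.

Definition ovR (t t' a a' : bool) : R :=
  if t == t' then (a == a')%:R else s2 * (-1) ^+ (a && a').

Lemma s2_sqr : s2 * s2 = 2^-1.
Proof.
by rewrite -invfM -expr2 sqr_sqrtr // ler0n.
Qed.

Lemma ovR_sum t t' a a' :
  \sum_(b : bool) hadR t a b * hadR t' a' b = ovR t t' a a'.
Proof.
rewrite big_bool /hadR /ovR.
have h := s2_sqr.
case: t; case: t'; case: a; case: a' => /=; rewrite ?eqxx //=;
  try (rewrite ?expr1 ?expr0 ?mulr1 ?mulrN1 ?mulNr ?mulrN ?mul1r ?mulr0 ?mul0r ?addr0 ?add0r ?opprK ?h ?subrr //).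
all: rewrite ?oppr0 ?add0r ?addNr //.
all: by rewrite [RHS](splitr 1) div1r.
Qed.

Lemma sum_enum lam (G : bits lam -> C) :
  \sum_(k < qdim lam) G (enum_val k) = \sum_(y : bits lam) G y.
Proof. by rewrite /qdim -(big_enum_val (A := predT)); apply: eq_bigl. Qed.

Lemma ketE lam (x th : bits lam) k j :
  bb84_ket x th k j = (\prod_i hadR (th i) (x i) (enum_val k i))%:C%C.
Proof.
rewrite mxE rmorph_prod; apply: eq_bigr => i _; exact: had_ampE.
Qed.

Lemma prod_sum_distr lam (F : 'I_lam -> bool -> R) :
  \sum_(y : bits lam) \prod_i F i (y i) = \prod_i \sum_(b : bool) F i b.
Proof. by rewrite bigA_distr_bigA. Qed.

Lemma ket_dot lam (x th x' th' : bits lam) :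
  dot (bb84_ket x th) (bb84_ket x' th') =
  (\prod_i ovR (th i) (th' i) (x i) (x' i))%:C%C.
Proof.
rewrite dotE.
rewrite (eq_bigr (fun k => (\prod_i (hadR (th i) (x i) ((enum_val k : bits lam) i) * hadR (th' i) (x' i) ((enum_val k : bits lam) i)))%:C%C)); last first.
  by move=> k _; rewrite ketE ketE conjC_realC -rmorphM -big_split.
rewrite (sum_enum (fun y => (\prod_i (hadR (th i) (x i) (y i) * hadR (th' i) (x' i) (y i)))%:C%C)).
rewrite -rmorph_sum. rewrite (prod_sum_distr (fun i b => hadR (th i) (x i) b * hadR (th' i) (x' i) b)); congr (_%:C%C).
by apply: eq_bigr => i _; rewrite ovR_sum.
Qed.

Lemma prod_eq_bits lam (y y' : bits lam) :
  \prod_i ((y i == y' i)%:R : R) = (y == y')%:R.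
Proof.
case: eqP => [->|neq].
  by rewrite big1 // => i _; rewrite eqxx.
have [i hi] : exists i, y i != y' i.
  apply/existsP; apply: contraT; rewrite negb_exists => /forallP H.
  by case: neq; apply/ffunP => i; apply/eqP; move: (H i); rewrite negbK.
by rewrite (bigD1 i) //= (negPf hi) mul0r.
Qed.

Lemma ket_dot_same lam (x x' th : bits lam) :
  dot (bb84_ket x th) (bb84_ket x' th) = (x == x')%:R :> C.
Proof.
rewrite ket_dot (eq_bigr (fun i => ((x i == x' i)%:R : R))); last first.
  by move=> i _; rewrite /ovR eqxx.
by rewrite prod_eq_bits rmorph_nat.
Qed.

Lemma hadR_sym t a b : hadR t a b = hadR t b a.
Proof. by rewrite /hadR andbC eq_sym. Qed.

Lemma ket_complete lam (th : bits lam) :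
  \sum_(x : bits lam) bb84_ket x th *m adjmx (bb84_ket x th) = 1%:M :> 'M[C]_(qdim lam).
Proof.
apply/matrixP=> k l; rewrite summxE !mxE.
rewrite (eq_bigr (fun x : bits lam => (\prod_i (hadR (th i) ((enum_val k : bits lam) i) (x i) * hadR (th i) ((enum_val l : bits lam) i) (x i)))%:C%C)); last first.
  move=> x _; rewrite mxE big_ord1 adjmxE ketE ketE conjC_realC -rmorphM -big_split /=.
  congr (_%:C%C); apply: eq_bigr => i _.
  by rewrite (hadR_sym (th i) (x i)) (hadR_sym (th i) (x i)).
rewrite -rmorph_sum.
rewrite (prod_sum_distr (fun i b => hadR (th i) ((enum_val k : bits lam) i) b * hadR (th i) ((enum_val l : bits lam) i) b)).
rewrite (eq_bigr (fun i => (((enum_val k : bits lam) i == (enum_val l : bits lam) i)%:R : R))); last first.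
  by move=> i _; rewrite ovR_sum /ovR eqxx.
rewrite prod_eq_bits rmorph_nat.
have -> : (enum_val k == enum_val l) = (k == l).
  case: (k =P l) => [->|ne]; first by rewrite eqxx.
  apply: negbTE; apply/eqP => /enum_val_inj; exact: ne.
by [].
Qed.

Definition kfR (t t' : bool) : R := if t == t' then 1 else s2.

Lemma s2_ge0 : 0 <= s2.
Proof. by rewrite invr_ge0 sqrtr_ge0. Qed.

Lemma ovR_le t t' a a' : `|ovR t t' a a'| <= kfR t t'.
Proof.
rewrite /ovR /kfR; case: (t == t').
  by case: (a == a'); rewrite ?normr1 ?normr0.
by rewrite normrM normrX normrN1 expr1n mulr1 ger0_norm // s2_ge0.
Qed.

Lemma kfR_ge0 t t' : 0 <= kfR t t'.
Proof. by rewrite /kfR; case: (t == t'); rewrite ?ler01 ?s2_ge0. Qed.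

Lemma kfR_sym t t' : kfR t t' = kfR t' t.
Proof. by rewrite /kfR eq_sym. Qed.

Definition kap lam (th th' : bits lam) : R := \prod_i kfR (th i) (th' i).

Lemma kap_ge0 lam (th th' : bits lam) : 0 <= kap th th'.
Proof. by apply: prodr_ge0 => i _; apply: kfR_ge0. Qed.

Lemma kap_sym lam (th th' : bits lam) : kap th th' = kap th' th.
Proof. by apply: eq_bigr => i _; apply: kfR_sym. Qed.

Lemma ov_le lam (x th x' th' : bits lam) :
  `|\prod_i ovR (th i) (th' i) (x i) (x' i)| <= kap th th'.
Proof.
rewrite normr_prod; apply: ler_prod => i _.
by rewrite normr_ge0 ovR_le.
Qed.

Lemma kap_sum lam (th : bits lam) :
  \sum_(th' : bits lam) kap th th' = (1 + s2) ^+ lam.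
Proof.
rewrite /kap (prod_sum_distr (fun i b => kfR (th i) b)).
rewrite (eq_bigr (fun _ => 1 + s2)); first by rewrite prodr_const card_ord.
move=> i _; rewrite big_bool /kfR.
by case: (th i) => //=; rewrite addrC.
Qed.

End Kets.

Section Core1.
Variable R : realType.
Local Notation C := R[i].

Lemma adj_mul_vec n (u v : 'cV[C]_n) : adjmx u *m v = (dot u v)%:M.
Proof. by apply/matrixP=> p q; rewrite [p]ord1 [q]ord1 [RHS]mxE eqxx mulr1n. Qed.

Lemma outer_mul n (e f g h : 'cV[C]_n) :
  (e *m adjmx f) *m (g *m adjmx h) = dot f g *: (e *m adjmx h).
Proof.
by rewrite mulmxA -[e *m _ *m g]mulmxA adj_mul_vec mul_mx_scalar scalemxAl.
Qed.

Lemma adj_outer n (e f : 'cV[C]_n) : adjmx (e *m adjmx f) = f *m adjmx e.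
Proof. by rewrite adjmx_mul adjmxK. Qed.

Lemma n2_sum_orth n (I : finType) (F : I -> 'M[C]_n) (a : 'cV[C]_n) :
  (forall i, adjmx (F i) = F i) ->
  (forall i j, i != j -> F i *m F j = 0) ->
  n2 ((\sum_i F i) *m a) = \sum_i n2 (F i *m a).
Proof.
move=> hF oF; rewrite /n2 mulmx_suml dot_suml.
apply: eq_bigr => i _; rewrite dot_sumr (bigD1 i) //= big1 ?addr0 //.
move=> j ji; rewrite -{1}(hF i) -dot_mull mulmxA oF 1?eq_sym //.
by rewrite mul0mx /dot mulmx0 mxE.
Qed.

Lemma sum_delta (I : finType) n m (F : I -> 'M[C]_(n, m)) (x : I) :
  \sum_y ((x == y)%:R *: F y) = F x.
Proof.
rewrite (bigD1 x) //= eqxx scale1r big1 ?addr0 // => y yx.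
by rewrite eq_sym (negPf yx) scale0r.
Qed.

End Core1.

Section Core2.
Variable R : realType.
Local Notation C := R[i].
Variables (lam dB dC : nat).
Variable G : bits lam -> bits lam -> 'M[C]_dB.
Variable K : bits lam -> bits lam -> 'M[C]_dC.
Hypothesis hG : forall th x, adjmx (G th x) = G th x.
Hypothesis hK : forall th x, adjmx (K th x) = K th x.
Hypothesis sG : forall th, \sum_x G th x *m G th x = 1%:M.
Hypothesis sK : forall th, \sum_x K th x *m K th x = 1%:M.

Local Notation N := (qdim lam).
Local Notation rho th x := (@bb84_proj R lam x th).

Lemma rho_adj th x : adjmx (rho th x) = rho th x.
Proof. exact: adj_outer. Qed.

Lemma rho_mul_same th x x' :
  rho th x *m rho th x' = (x == x')%:R *: rho th x.
Proof.
rewrite /bb84_proj outer_mul ket_dot_same.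
by case: eqP => [->|_]; rewrite ?scale0r.
Qed.

Lemma rho_sum th : \sum_x rho th x = 1%:M.
Proof. exact: ket_complete. Qed.

Lemma tens_orth th x x' (A B : 'M[C]_(dB * dC)) : x != x' ->
  (rho th x *t A) *m (rho th x' *t B) = 0.
Proof.
move=> nx; rewrite tensmx_mul rho_mul_same (negPf nx) scale0r.
by rewrite tens0mx.
Qed.

Definition Tm th x := rho th x *t (G th x *t K th x).
Definition Sm th := \sum_x Tm th x.
Definition Xm th := \sum_x rho th x *t (G th x *t (1%:M : 'M[C]_dC)).
Definition Ym th := \sum_x rho th x *t ((1%:M : 'M[C]_dB) *t K th x).

Lemma Tm_adj th x : adjmx (Tm th x) = Tm th x.
Proof. by rewrite /Tm !adjmx_tens rho_adj hG hK. Qed.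

Lemma Sm_adj th : adjmx (Sm th) = Sm th.
Proof. by rewrite /Sm adjmx_sum; apply: eq_bigr => x _; apply: Tm_adj. Qed.

Lemma Xm_adj th : adjmx (Xm th) = Xm th.
Proof.
by rewrite /Xm adjmx_sum; apply: eq_bigr => x _; rewrite !adjmx_tens rho_adj hG adjmx1.
Qed.

Lemma Ym_adj th : adjmx (Ym th) = Ym th.
Proof.
by rewrite /Ym adjmx_sum; apply: eq_bigr => x _; rewrite !adjmx_tens rho_adj hK adjmx1.
Qed.

Lemma Sm_XY th : Sm th = Xm th *m Ym th.
Proof.
rewrite /Xm /Ym mulmx_suml; apply: eq_bigr => x _.
rewrite mulmx_sumr.
rewrite (eq_bigr (fun y => (x == y)%:R *: Tm th x)); last first.
  move=> y _; rewrite tensmx_mul tensmx_mul mulmx1 mul1mx rho_mul_same tensmxZl.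
  by case: eqP => [<-|_]; rewrite ?scale0r ?scale1r.
by rewrite sum_delta.
Qed.

Lemma n2_Sm th v : n2 (Sm th *m v) = \sum_x n2 (Tm th x *m v).
Proof.
apply: n2_sum_orth => [x|x y nxy]; first exact: Tm_adj.
exact: tens_orth.
Qed.

Lemma n2_Xm th v :
  n2 (Xm th *m v) = \sum_x n2 ((rho th x *t (G th x *t (1%:M : 'M[C]_dC))) *m v).
Proof.
apply: n2_sum_orth => [x|x y nxy]; last exact: tens_orth.
by rewrite !adjmx_tens rho_adj hG adjmx1.
Qed.

Lemma n2_Ym th v :
  n2 (Ym th *m v) = \sum_x n2 ((rho th x *t ((1%:M : 'M[C]_dB) *t K th x)) *m v).
Proof.
apply: n2_sum_orth => [x|x y nxy]; last exact: tens_orth.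
by rewrite !adjmx_tens rho_adj hK adjmx1.
Qed.

Lemma n2_1 n (a : 'cV[C]_n) : n2 a = dot a (1%:M *m a).
Proof. by rewrite mul1mx. Qed.

Lemma n2_adj n m (A : 'M[C]_(m, n)) (a : 'cV[C]_n) :
  n2 (A *m a) = dot a ((adjmx A *m A) *m a).
Proof. by rewrite /n2 -mulmxA [RHS]dot_mull adjmxK. Qed.

Lemma le_diag_sum (I : finType) (F : I -> I -> C) :
  (forall x y, 0 <= F x y) -> \sum_x F x x <= \sum_x \sum_y F x y.
Proof.
move=> F0; apply: ler_sum => x _.
rewrite (bigD1 x) //= lerDl; apply: sumr_ge0 => y _; exact: F0.
Qed.

Lemma Xm_contr th a : n2 (Xm th *m a) <= n2 a.
Proof.
rewrite n2_Xm.
have -> : n2 a = \sum_x \sum_y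
    n2 ((rho th x *t (G th y *t (1%:M : 'M[C]_dC))) *m a).
  rewrite n2_1 -(@tensmx11 R N (dB * dC)) -(@tensmx11 R dB dC) -(rho_sum th) -(sG th) tensmx_suml.
  rewrite mulmx_suml dot_sumr; apply: eq_bigr => x _.
  rewrite tensmx_suml tensmx_sumr mulmx_suml dot_sumr; apply: eq_bigr => y _.
  rewrite n2_adj !adjmx_tens rho_adj hG adjmx1 tensmx_mul tensmx_mul mulmx1.
  by rewrite rho_mul_same eqxx scale1r.
apply: ler_sum => x _; rewrite (bigD1 x) //= lerDl.
by apply: sumr_ge0 => y _; apply: n2_ge0.
Qed.

Lemma Ym_contr th a : n2 (Ym th *m a) <= n2 a.
Proof.
rewrite n2_Ym.
have -> : n2 a = \sum_x \sum_y
    n2 ((rho th x *t ((1%:M : 'M[C]_dB) *t K th y)) *m a).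
  rewrite n2_1 -(@tensmx11 R N (dB * dC)) -(@tensmx11 R dB dC) -(rho_sum th) -(sK th) tensmx_suml.
  rewrite mulmx_suml dot_sumr; apply: eq_bigr => x _.
  rewrite tensmx_sumr tensmx_sumr mulmx_suml dot_sumr; apply: eq_bigr => y _.
  rewrite n2_adj !adjmx_tens rho_adj hK adjmx1 tensmx_mul tensmx_mul mulmx1.
  by rewrite rho_mul_same eqxx scale1r.
apply: ler_sum => x _; rewrite (bigD1 x) //= lerDl.
by apply: sumr_ge0 => y _; apply: n2_ge0.
Qed.

Lemma norm_realC (r : R) : `|(r%:C)%C : C| = (`|r|)%:C%C.
Proof.
rewrite normc_def /=.
by rewrite expr0n /= addr0 sqrtr_sqr.
Qed.

Lemma ket_dot_real (th th' x x' : bits lam) :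
  (dot (bb84_ket x th) (bb84_ket x' th'))^* = dot (bb84_ket x th) (bb84_ket x' th') :> C.
Proof. by rewrite ket_dot conjC_realC. Qed.

Lemma ket_dot_le (th th' x x' : bits lam) :
  `|dot (bb84_ket x th) (bb84_ket x' th')| <= (kap R th th')%:C%C :> C.
Proof. by rewrite ket_dot norm_realC lecR ov_le. Qed.

Definition Pm (th th' x x' : bits lam) := bb84_ket x th *t (G th' x' *t (1%:M : 'M[C]_dC)).
Definition Qm (th th' x x' : bits lam) := adjmx (bb84_ket x' th') *t ((1%:M : 'M[C]_dB) *t K th x).

Lemma YX_expand th th' :
  Ym th *m Xm th' = \sum_x \sum_x'
    dot (bb84_ket x th) (bb84_ket x' th') *: (Pm th th' x x' *m Qm th th' x x').
Proof.
rewrite /Ym /Xm mulmx_suml; apply: eq_bigr => x _.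
rewrite mulmx_sumr; apply: eq_bigr => x' _.
rewrite /Pm /Qm !tensmx_mul !mulmx1 !mul1mx /bb84_proj outer_mul.
by rewrite tensmxZl.
Qed.

Lemma rd_mid th th' u v :
  rd u ((Ym th *m Xm th') *m v) = \sum_x \sum_x'
    dot (bb84_ket x th) (bb84_ket x' th') *
      rd (adjmx (Pm th th' x x') *m u) (Qm th th' x x' *m v).
Proof.
have E : dot u ((Ym th *m Xm th') *m v) = \sum_x \sum_x'
    dot (bb84_ket x th) (bb84_ket x' th') *
      dot (adjmx (Pm th th' x x') *m u) (Qm th th' x x' *m v).
  rewrite YX_expand mulmx_suml dot_sumr; apply: eq_bigr => x _.
  rewrite mulmx_suml dot_sumr; apply: eq_bigr => x' _.
  by rewrite -scalemxAl dotZr -mulmxA dot_mull.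
rewrite /rd E rmorph_sum -big_split; apply: eq_bigr => x _.
rewrite rmorph_sum -big_split; apply: eq_bigr => x' _.
by rewrite rmorphM /= ket_dot_real mulrDr.
Qed.

Lemma sum_n2_P th th' u :
  \sum_x \sum_x' n2 (adjmx (Pm th th' x x') *m u) = n2 u.
Proof.
rewrite n2_1 -(@tensmx11 R N (dB * dC)) -(@tensmx11 R dB dC) -(rho_sum th) -(sG th') tensmx_suml.
rewrite mulmx_suml dot_sumr; apply: eq_bigr => x _.
rewrite tensmx_suml tensmx_sumr mulmx_suml dot_sumr; apply: eq_bigr => x' _.
rewrite n2_adj adjmxK /Pm !adjmx_tens hG adjmx1 !tensmx_mul mulmx1.
by [].
Qed.

Lemma sum_n2_Q th th' v :
  \sum_x \sum_x' n2 (Qm th th' x x' *m v) = n2 v.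
Proof.
rewrite exchange_big /=.
rewrite n2_1 -(@tensmx11 R N (dB * dC)) -(@tensmx11 R dB dC) -(rho_sum th') -(sK th) tensmx_suml.
rewrite mulmx_suml dot_sumr; apply: eq_bigr => x' _.
rewrite tensmx_sumr tensmx_sumr mulmx_suml dot_sumr; apply: eq_bigr => x _.
rewrite n2_adj /Qm !adjmx_tens adjmxK hK adjmx1 !tensmx_mul mulmx1.
by [].
Qed.

Lemma mid_bound th th' u v :
  rd u ((Ym th *m Xm th') *m v) <= (kap R th th')%:C%C * (n2 u + n2 v).
Proof.
rewrite rd_mid -(sum_n2_P th th' u) -(sum_n2_Q th th' v) -big_split mulr_sumr.
apply: ler_sum => x _; rewrite -big_split mulr_sumr; apply: ler_sum => x' _.
set c := dot _ _; set r := rd _ _.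
have cr : c \is Num.real by apply/CrealP; rewrite /c ket_dot_real.
apply: le_trans (real_ler_norm (rpredM cr (rd_real _ _))) _.
rewrite normrM; apply: ler_pM; rewrite ?normr_ge0 //.
  exact: ket_dot_le.
exact: norm_rd_le.
Qed.

Lemma inner_bound th th' a b :
  rd (Sm th *m a) (Sm th' *m b) <= (kap R th th')%:C%C * (n2 a + n2 b).
Proof.
have E : dot (Sm th *m a) (Sm th' *m b) =
    dot (Xm th *m a) ((Ym th *m Xm th') *m (Ym th' *m b)).
  rewrite -{1}(Sm_adj th) -dot_mull -{1}(Xm_adj th) -dot_mull.
  by rewrite (Sm_XY th) (Sm_XY th') !mulmxA.
rewrite /rd E.
apply: le_trans (mid_bound th th' _ _) _.
apply: ler_wpM2l; first by rewrite lecR kap_ge0.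
by apply: lerD; [apply: Xm_contr | apply: Ym_contr].
Qed.

Local Notation s2 := ((Num.sqrt (2 : R))^-1).

Lemma sum_kap_C (th : bits lam) : \sum_th' (kap R th th')%:C%C = (((1 + s2) ^+ lam)%:C%C : C).
Proof. by rewrite -rmorph_sum kap_sum. Qed.

Lemma outer_bound v :
  \sum_th n2 (Sm th *m v) <= (((1 + s2) ^+ lam)%:C%C : C) * n2 v.
Proof.
set c : C := ((1 + s2) ^+ lam)%:C%C.
set q := \sum_th n2 (Sm th *m v).
have c_gt0 : 0 < c.
  rewrite /c ltcR; apply: exprn_gt0.
  by apply: ltr_pwDl; rewrite ?ltr01 ?s2_ge0 //; apply: s2_ge0.
have qr : q^* = q.
  by apply/CrealP; apply: rpred_sum => th _; apply: n2_real.
pose z th := Sm th *m v.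
pose w := \sum_th Sm th *m z th.
have dwv : dot w v = q.
  rewrite /w dot_suml; apply: eq_bigr => th _.
  by rewrite -{1}(Sm_adj th) -dot_mull.
have rwv : rd w v = 2 * q.
  by rewrite /rd dwv qr; ring.
have nw : 2 * n2 w <= 2 * (c * q).
  have -> : 2 * n2 w = \sum_th \sum_th' rd (Sm th *m z th) (Sm th' *m z th').
    rewrite /rd.
    have e1 : n2 w = \sum_th \sum_th' dot (Sm th *m z th) (Sm th' *m z th').
      by rewrite /n2 /w dot_suml; apply: eq_bigr => th _; rewrite dot_sumr.
    have e2 : n2 w = (n2 w)^* by apply/esym/CrealP/n2_real.
    rewrite mulr_natl mulr2n {1}e1 e2 e1 rmorph_sum -big_split.
    by apply: eq_bigr => th _; rewrite rmorph_sum -big_split.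
  apply: le_trans (_ : \sum_th \sum_th' (kap R th th')%:C%C * (n2 (z th) + n2 (z th')) <= _).
    apply: ler_sum => th _; apply: ler_sum => th' _; exact: inner_bound.
  rewrite le_eqVlt; apply/orP; left; apply/eqP.
  rewrite mulr_natl mulr2n.
  have -> : \sum_th \sum_th' (kap R th th')%:C%C * (n2 (z th) + n2 (z th')) =
     \sum_th \sum_th' (kap R th th')%:C%C * n2 (z th) +
     \sum_th \sum_th' (kap R th th')%:C%C * n2 (z th').
    by rewrite -big_split; apply: eq_bigr => th _; rewrite -big_split; apply: eq_bigr => th' _; rewrite mulrDr.
  congr (_ + _).
    rewrite /q mulr_sumr; apply: eq_bigr => th _.
    by rewrite -mulr_suml sum_kap_C.
  rewrite exchange_big /q mulr_sumr; apply: eq_bigr => th' _.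
  rewrite -mulr_suml; congr (_ * _).
  rewrite /c -(sum_kap_C th'); apply: eq_bigr => th _; by rewrite kap_sym.
have cn0 : c != 0 by rewrite gt_eqF.
set sc := c^-1.
have scr : sc \is Num.real by apply: ger0_real; rewrite invr_ge0 ltW.
have := rd_scaled w v scr.
rewrite rwv => H.
have nw' : n2 w <= c * q by move: nw; rewrite ler_pM2l // ltr0n.
have H2 : sc ^+ 2 * n2 w <= sc * q.
  apply: le_trans (ler_wpM2l _ nw') _; first by rewrite exprn_ge0 // invr_ge0 ltW.
  by rewrite expr2 -mulrA [sc * (c * q)]mulrA mulVf // mul1r.
have H4 : sc * q <= n2 v.
  have H5 := le_trans H (lerD H2 (lexx (n2 v))).
  move: H5; rewrite mulrA [sc * 2]mulrC -mulrA mulr_natl mulr2n.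
  by rewrite lerD2l.
have -> : q = c * (sc * q) by rewrite mulrA mulfV // mul1r.
by apply: ler_wpM2l => //; apply: ltW.
Qed.

End Core2.

Section Choi.
Variable R : realType.
Local Notation C := R[i].
Variables (n m : nat).
Variable Phi : 'M[C]_n -> 'M[C]_m.
Hypothesis linP : linear_map Phi.

Lemma Phi0 : Phi 0 = 0.
Proof.
have := linP 1 0 0; rewrite !scale1r addr0 => h.
by apply: (addrI (Phi 0)); rewrite addr0 -h.
Qed.

Lemma PhiD A B : Phi (A + B) = Phi A + Phi B.
Proof. by have := linP 1 A B; rewrite !scale1r. Qed.

Lemma PhiZ a A : Phi (a *: A) = a *: Phi A.
Proof. by have := linP a A 0; rewrite !addr0 Phi0 addr0. Qed.

Lemma Phi_sum (I : finType) (F : I -> 'M[C]_n) :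
  Phi (\sum_i F i) = \sum_i Phi (F i).
Proof. exact: (big_morph Phi PhiD Phi0). Qed.

Lemma Phi_expand X :
  Phi X = \sum_i \sum_j X i j *: Phi (delta_mx i j).
Proof.
rewrite {1}(matrix_sum_delta X) Phi_sum; apply: eq_bigr => i _.
by rewrite Phi_sum; apply: eq_bigr => j _; rewrite PhiZ.
Qed.

Definition choi : 'M[C]_(n * m) :=
  \sum_(i < n) \sum_(j < n) (delta_mx i j *t Phi (delta_mx i j)).

Lemma trace_delta p (i j : 'I_p) (A : 'M[C]_p) :
  \tr (delta_mx i j *m A) = A j i.
Proof.
rewrite /mxtrace (bigD1 i) //= big1 ?addr0.
  rewrite mxE (bigD1 j) //= big1 ?addr0.
    by rewrite mxE !eqxx mul1r.
  by move=> k kj; rewrite mxE (negPf kj) andbF mul0r.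
move=> k ki; rewrite mxE big1 // => l _.
by rewrite mxE (negPf ki) mul0r.
Qed.

Lemma trace_delta1 p (i j : 'I_p) : \tr (delta_mx i j : 'M[C]_p) = (i == j)%:R.
Proof.
by rewrite -[delta_mx i j]mulmx1 trace_delta mxE eq_sym.
Qed.

Lemma tr_choi (X : 'M[C]_n) (Y : 'M[C]_m) :
  \tr (Y *m Phi X) = \tr (choi *m (X^T *t Y)).
Proof.
rewrite Phi_expand /choi mulmx_sumr mulmx_suml !raddf_sum /=; apply: eq_bigr => i _.
rewrite mulmx_sumr mulmx_suml !raddf_sum /=; apply: eq_bigr => j _.
rewrite -scalemxAr mxtraceZ tensmx_mul mxtrace_tens trace_delta mxE.
by rewrite mxtrace_mulC.
Qed.

Hypothesis tpP : trace_preserving Phi.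

Lemma tr_choi_n : \tr choi = n%:R.
Proof.
rewrite /choi raddf_sum /= (eq_bigr (fun _ => (1 : C))); first by rewrite sumr_const card_ord.
move=> i _; rewrite raddf_sum /= (bigD1 i) //= big1 ?addr0.
  by rewrite mxtrace_tens tpP !trace_delta1 eqxx mul1r.
by move=> j ji; rewrite mxtrace_tens trace_delta1 eq_sym (negPf ji) mul0r.
Qed.

Definition om : 'cV[C]_(n * n) :=
  \col_r (((mxtens_unindex r).1 == (mxtens_unindex r).2)%:R).
Definition M0 : 'M[C]_(n * n) := om *m adjmx om.

Lemma M0_psd : psdmx M0.
Proof.
move=> v; rewrite psd_quad /M0 -mulmxA adj_mul_vec mul_mx_scalar dotZr dotC.
by rewrite mulrC mul_conjC_ge0.
Qed.

Lemma choi_ampl : ampl Phi M0 = choi.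
Proof.
rewrite /ampl /choi; apply: eq_bigr => i _; apply: eq_bigr => j _.
congr (_ *t Phi _); apply/matrixP => a b.
rewrite !mxE big_ord1 !mxE !mxtens_indexK /= conjC_nat -natrM mulnb.
by rewrite [a == i]eq_sym [b == j]eq_sym.
Qed.

Lemma choi_psd : completely_positive Phi -> psdmx choi.
Proof. by move=> cpP; rewrite -choi_ampl; apply: cpP; apply: M0_psd. Qed.

End Choi.

Lemma pmax_bound (R : realType) (T : finType) (p : T -> R) (h : R) :
  is_distr p -> h <= Hmin p -> forall t, p t <= 2 `^ (- h).
Proof.
move=> [p0 p1] hH t.
set pm := \big[Num.max/0]_(t : T) p t.
have pt_le : forall t, p t <= pm by move=> u; apply: le_bigmax.
have pm_gt0 : 0 < pm.
  case: (ltP 0 pm) => // hle.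
  have h1 : 1 <= pm *+ #|T|.
    by rewrite -p1 -sumr_const; apply: ler_sum => u _; apply: pt_le.
  have : pm *+ #|T| <= 0 by rewrite -mulr_natr mulr_le0_ge0 // ler0n.
  by move=> /(le_trans h1); rewrite ler10.
apply: (le_trans (pt_le t)).
have ln2 : 0 < ln (2 : R) by apply: ln_gt0; rewrite ltr1n.
rewrite /powR pnatr_eq0 /= -{1}(lnK pm_gt0) ler_expR.
move: hH; rewrite /Hmin /log2 -/pm lerNr => hH.
rewrite -(divfK (lt0r_neq0 ln2) (ln pm)).
by apply: ler_wpM2r => //; apply: ltW.
Qed.

Section Final.
Variable R : realType.
Local Notation C := R[i].

Lemma ket_conj lam (x th : bits lam) k j :
  (bb84_ket x th k j)^* = bb84_ket x th k j :> C.
Proof. by rewrite ketE conjC_realC. Qed.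

Lemma rho_T lam (x th : bits lam) :
  trmx (bb84_proj x th) = bb84_proj x th :> 'M[C]_(qdim lam).
Proof.
apply/matrixP=> a b; rewrite mxE /bb84_proj !mxE !big_ord1 !adjmxE !ket_conj.
by rewrite mulrC.
Qed.

Lemma tr_LZL n (L Z : 'M[C]_n) : adjmx L = L ->
  \tr (L *m Z *m L) = \sum_j dot (col j L) (Z *m col j L).
Proof.
move=> hL; rewrite /mxtrace; apply: eq_bigr => j _.
rewrite dotE -mulmxA mxE; apply: eq_bigr => k _.
rewrite !mxE -adjmxE hL; congr (_ * _).
by apply: eq_bigr => l _; rewrite mxE.
Qed.

End Final.

Theorem mainTheorem1 (R : realType) (lam : nat) (p : bits lam -> R) (h : R)
  (dB dC : nat)
  (B : bits lam -> bits lam -> 'M[R[i]]_dB)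
  (Cm : bits lam -> bits lam -> 'M[R[i]]_dC)
  (Phi : 'M[R[i]]_(qdim lam) -> 'M[R[i]]_(dB * dC)) :
  is_distr p -> h <= Hmin p ->
  (forall theta, povm (B theta)) ->
  (forall theta, povm (Cm theta)) ->
  cptp Phi ->
  \sum_(x : bits lam)
     (p x)%:C%C *
       ((#|{: bits lam}|%:R)^-1 *
        \sum_(theta : bits lam)
          \tr ((B theta x *t Cm theta x) *m Phi (bb84_proj x theta)))
  <= ((2 `^ (- h)) * (1 + (Num.sqrt (2 : R))^-1) ^+ lam)%:C%C.
Proof.
move=> pd hH povB povC [linP cpP tpP].
have pb := pmax_bound pd hH.
pose G th x := sqrtmx (B th x).
pose K th x := sqrtmx (Cm th x).
have hG : forall th x, adjmx (G th x) = G th x.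
  by move=> th x; exact: (psd_sqrt ((povB th).1 x)).1.
have GG : forall th x, G th x *m G th x = B th x.
  by move=> th x; exact: (psd_sqrt ((povB th).1 x)).2.
have hK : forall th x, adjmx (K th x) = K th x.
  by move=> th x; exact: (psd_sqrt ((povC th).1 x)).1.
have KK : forall th x, K th x *m K th x = Cm th x.
  by move=> th x; exact: (psd_sqrt ((povC th).1 x)).2.
have sG : forall th, \sum_x G th x *m G th x = 1%:M.
  by move=> th; rewrite (eq_bigr _ (fun x _ => GG th x)); exact: (povB th).2.
have sK : forall th, \sum_x K th x *m K th x = 1%:M.
  by move=> th; rewrite (eq_bigr _ (fun x _ => KK th x)); exact: (povC th).2.
have [hL LL] := psd_sqrt (choi_psd cpP).
set L := sqrtmx (choi Phi) in hL LL.
have trJ := tr_choi_n tpP.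
have key : forall th x,
    \tr ((B th x *t Cm th x) *m Phi (bb84_proj x th)) =
    \sum_j n2 (Tm G K th x *m col j L).
  move=> th x; rewrite (tr_choi linP) rho_T -LL -mulmxA mxtrace_mulC.
  rewrite tr_LZL //; apply: eq_bigr => j _.
  rewrite n2_adj (Tm_adj hG hK) /Tm !tensmx_mul rho_mul_same eqxx scale1r.
  by rewrite GG KK.
set pm := 2 `^ (- h).
set Nc : R[i] := (#|{: bits lam}|%:R).
set c : R[i] := ((1 + (Num.sqrt (2 : R))^-1) ^+ lam)%:C%C.
have Nc_gt0 : 0 < Nc.
  by rewrite /Nc ltr0n; apply/card_gt0P; exists [ffun=> false].
have trn : \sum_j n2 (col j L) = Nc.
  have := tr_LZL 1%:M hL; rewrite mulmx1 LL trJ => H.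
  rewrite /Nc -[#|{: bits lam}|]/(qdim lam) H.
  by apply: eq_bigr => j _; rewrite mul1mx.
rewrite (eq_bigr (fun x => (p x)%:C%C * (Nc^-1 *
    \sum_(th : bits lam) \sum_j n2 (Tm G K th x *m col j L)))); last first.
  by move=> x _; congr (_ * (_ * _)); apply: eq_bigr => th _; rewrite key.
apply: (@le_trans _ _ (\sum_(x : bits lam) pm%:C%C * (Nc^-1 *
    \sum_(th : bits lam) \sum_j n2 (Tm G K th x *m col j L)))).
  apply: ler_sum => x _; apply: ler_wpM2r; last by rewrite lecR pb.
  apply: mulr_ge0; first by rewrite invr_ge0 ltW.
  by apply: sumr_ge0 => th _; apply: sumr_ge0 => j _; apply: n2_ge0.
have E : \sum_(x : bits lam) pm%:C%C * (Nc^-1 *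
    \sum_(th : bits lam) \sum_j n2 (Tm G K th x *m col j L)) =
    pm%:C%C * Nc^-1 * \sum_j \sum_(th : bits lam) n2 (Sm G K th *m col j L).
  rewrite -mulrA -mulr_sumr -mulr_sumr; congr (_ * (_ * _)).
  rewrite exchange_big /=.
  rewrite (eq_bigr (fun th => \sum_j \sum_(x : bits lam) n2 (Tm G K th x *m col j L))); last first.
    by move=> th _; rewrite exchange_big.
  rewrite exchange_big /=; apply: eq_bigr => j _; apply: eq_bigr => th _.
  by rewrite (n2_Sm hG hK).
rewrite E.
apply: (@le_trans _ _ (pm%:C%C * Nc^-1 * \sum_j c * n2 (col j L))).
  apply: ler_wpM2l.
    by apply: mulr_ge0; [rewrite lecR; apply: powR_ge0 | rewrite invr_ge0 ltW].
  by apply: ler_sum => j _; apply: (outer_bound hG hK sG sK).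
rewrite -mulr_sumr trn rmorphM /= -/c.
rewrite -mulrA [Nc^-1 * _]mulrC -mulrA mulfV ?gt_eqF // mulr1.
by [].
Qed.
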